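(* Let $\gamma\in(0,1)$ and consider the following networked Markov game $MG$ with 4 agents $\mathcal N=\{1,2,3,4\}$ on the path graph with edges $\{(1,2),(2,3),(3,4)\}$. Each agent has local state space $\mathcal S_i=\{s_b,s_g\}$ and local action space $\mathcal A_i=\{a_b,a_g\}$. All agents start in $s_b$ at time $0$. Transitions are deterministic: $s_1(t+1)=s_g$ if $a_1(t)=a_g$ and $s_1(t+1)=s_b$ if $a_1(t)=a_b$; for $i\in\{2,3,4\}$, $s_i(t+1)=s_{i-1}(t)$. Rewards: $r_1=r_2=r_3\equiv0$, and $r_4(s_4,a_4)=1$ if $(s_4,a_4)=(s_g,a_g)$ and $0$ otherwise. Policies are local stationary policies $\xi_i:\mathcal S_i\to\Delta(\mathcal A_i)$. Then $MG$ is a $1$-NMPG, but it is not a Markov potential game.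
   Context: With $J_i(\xi)=\sum_{t\ge0}\gamma^t\mathbb E_\xi[r_i(s(t),a(t))]$, $\Xi_i$ the local policies of agent $i$ and $\Xi=\prod_i\Xi_i$: the game is a $\kappa_G$-NMPG if there are functions $\Phi_i:\Xi\to\mathbb R$, $i\in\mathcal N$, such that for every $i\in\mathcal N$, every $j$ with graph distance $\mathrm{dist}(i,j)\le\kappa_G$, all $\xi_j,\xi_j'\in\Xi_j$ and $\xi_{-j}\in\Xi_{-j}$: $J_j(\xi_j',\xi_{-j})-J_j(\xi_j,\xi_{-j})=\Phi_i(\xi_j',\xi_{-j})-\Phi_i(\xi_j,\xi_{-j})$. The game is a Markov potential game (MPG) if there is a single $\Phi:\Xi\to\mathbb R$ with $J_i(\xi_i',\xi_{-i})-J_i(\xi_i,\xi_{-i})=\Phi(\xi_i',\xi_{-i})-\Phi(\xi_i,\xi_{-i})$ for all $i$, $\xi_i,\xi_i'\in\Xi_i$, $\xi_{-i}\in\Xi_{-i}$. *)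

(* Defs.v *)
From mathcomp Require Import all_boot all_order all_algebra.
From mathcomp Require Import all_classical all_reals all_analysis.
Set Implicit Arguments. Unset Strict Implicit. Unset Printing Implicit Defensive.
Import Order.TTheory GRing.Theory Num.Theory.
Local Open Scope ring_scope.

(* Agents 1,2,3,4 are the ordinals 0,1,2,3 of 'I_4.
   Local states: false = s_b, true = s_g.  Local actions: false = a_b, true = a_g. *)
Definition gstate := {ffun 'I_4 -> bool}.
Definition gaction := {ffun 'I_4 -> bool}.

(* A local stationary policy xi_i : S_i -> Delta(A_i); xi s a = probability of a in s. *)
Definition lpolicy (R : realType) := bool -> bool -> R.
Definition is_lpolicy (R : realType) (p : lpolicy R) : Prop :=
  forall s : bool, (forall a : bool, 0 <= p s a) /\ p s false + p s true = 1.
Definition profile (R : realType) := 'I_4 -> lpolicy R.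

Definition trans (s : gstate) (a : gaction) : gstate :=
  [ffun i : 'I_4 => if val i == 0%N then a i else s (inord (val i).-1)].

Definition init_state : gstate := [ffun _ => false].

Definition reward (R : realType) (i : 'I_4) (s : gstate) (a : gaction) : R :=
  if (val i == 3%N) && s i && a i then 1 else 0.

Definition joint_prob (R : realType) (xi : profile R) (s : gstate) (a : gaction) : R :=
  \prod_(i < 4) xi i (s i) (a i).

Fixpoint state_dist (R : realType) (xi : profile R) (t : nat) (s' : gstate) : R :=
  match t with
  | 0%N => if s' == init_state then 1 else 0
  | t'.+1 => \sum_(s : gstate) \sum_(a : gaction)
               state_dist xi t' s * joint_prob xi s a * (if trans s a == s' then 1 else 0)
  end.

Definition exp_reward (R : realType) (xi : profile R) (i : 'I_4) (t : nat) : R :=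
  \sum_(s : gstate) \sum_(a : gaction) state_dist xi t s * joint_prob xi s a * @reward R i s a.

Definition J (R : realType) (gamma : R) (i : 'I_4) (xi : profile R) : R :=
  limn (fun n => \sum_(0 <= t < n) gamma ^+ t * exp_reward xi i t).

Definition deviate (n : nat) (P : Type) (xi : 'I_n -> P) (j : 'I_n) (p : P) : 'I_n -> P :=
  fun k => if k == j then p else xi k.

Definition is_kNMPG (R : realType) (n : nat) (P : Type) (valid : P -> Prop)
    (dist : 'I_n -> 'I_n -> nat) (kappa : nat) (Jf : 'I_n -> ('I_n -> P) -> R) : Prop :=
  exists Phi : 'I_n -> ('I_n -> P) -> R,
    forall (i j : 'I_n), (dist i j <= kappa)%N ->
    forall (xi : 'I_n -> P) (p' : P), (forall k, valid (xi k)) -> valid p' ->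
      Jf j (deviate xi j p') - Jf j xi = Phi i (deviate xi j p') - Phi i xi.

Definition is_MPG (R : realType) (n : nat) (P : Type) (valid : P -> Prop)
    (Jf : 'I_n -> ('I_n -> P) -> R) : Prop :=
  exists Phi : ('I_n -> P) -> R,
    forall (i : 'I_n) (xi : 'I_n -> P) (p' : P), (forall k, valid (xi k)) -> valid p' ->
      Jf i (deviate xi i p') - Jf i xi = Phi (deviate xi i p') - Phi xi.

Definition path_dist (i j : 'I_4) : nat := (maxn i j - minn i j)%N.

(* Main.v *)
Require Import Defs.
From mathcomp Require Import all_boot all_order all_algebra.
From mathcomp Require Import all_classical all_reals all_analysis.
Import Order.TTheory GRing.Theory Num.Theory.
Local Open Scope ring_scope.

Section Aux.
Variable R : realType.

Definition validp (xi : profile R) := forall k, is_lpolicy (xi k).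

Lemma sum_bool_valid (p : lpolicy R) s : is_lpolicy p -> \sum_(b : bool) p s b = 1.
Proof. by move=> /(_ s) [_ H]; rewrite big_bool /= addrC. Qed.

Lemma joint_sum1 (xi : profile R) s (k : 'I_4) (g0 : bool -> R) :
  validp xi ->
  \sum_(a : gaction) joint_prob xi s a * g0 (a k) = \sum_(b : bool) xi k (s k) b * g0 b.
Proof.
move=> V.
transitivity (\sum_(a : gaction) \prod_(i < 4)
   (xi i (s i) (a i) * (if i == k then g0 (a i) else 1))).
  apply: eq_bigr => a _; rewrite /joint_prob big_split /=; congr (_ * _).
  by rewrite (bigD1 k) //= eqxx big1 ?mulr1 // => i /negbTE ->.
rewrite -(bigA_distr_bigA (fun i b => xi i (s i) b * (if i == k then g0 b else 1))) /=.
rewrite (bigD1 k) //= eqxx [X in _ * X]big1 ?mulr1 // => i /negbTE ->.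
under eq_bigr do rewrite mulr1.
exact: sum_bool_valid.
Qed.

Definition cst (b : bool) : gaction := [ffun=> b].

Lemma trans_cst s (a : gaction) : trans s a = trans s (cst (a ord0)).
Proof.
apply/ffunP => i; rewrite !ffunE.
case: ifP => // /eqP H; congr (a _); exact: val_inj.
Qed.

Lemma reward3_cst s (a : gaction) : reward R (inord 3) s a = reward R (inord 3) s (cst (a (inord 3))).
Proof. by rewrite /reward ffunE. Qed.

Lemma state_dist_S (xi : profile R) t s' : validp xi ->
  state_dist xi t.+1 s' = \sum_(s : gstate) state_dist xi t s *
     \sum_(b : bool) xi ord0 (s ord0) b * (if trans s (cst b) == s' then 1 else 0).
Proof.
move=> V /=; apply: eq_bigr => s _.
rewrite -(joint_sum1 xi s ord0 (fun b => if trans s (cst b) == s' then 1 else 0) V) mulr_sumr.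
by apply: eq_bigr => a _; rewrite mulrA -trans_cst.
Qed.

Lemma exp_reward3 (xi : profile R) t : validp xi ->
  exp_reward xi (inord 3) t = \sum_(s : gstate) state_dist xi t s *
     \sum_(b : bool) xi (inord 3) (s (inord 3)) b * reward R (inord 3) s (cst b).
Proof.
move=> V; apply: eq_bigr => s _.
rewrite -(joint_sum1 xi s (inord 3) (fun b => reward R (inord 3) s (cst b)) V) mulr_sumr.
by apply: eq_bigr => a _; rewrite mulrA -reward3_cst.
Qed.

Lemma state_dist_inv (xi xi' : profile R) t : validp xi -> validp xi' ->
  xi ord0 = xi' ord0 -> state_dist xi t =1 state_dist xi' t.
Proof.
move=> V V' E; elim: t => [//|t IH] s'.
rewrite !state_dist_S // E; apply: eq_bigr => s _; by rewrite IH.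
Qed.

Lemma J3_inv gamma (xi xi' : profile R) : validp xi -> validp xi' ->
  xi ord0 = xi' ord0 -> xi (inord 3) = xi' (inord 3) ->
  J gamma (inord 3) xi = J gamma (inord 3) xi'.
Proof.
move=> V V' E0 E3; rewrite /J.
have -> // : exp_reward xi (inord 3) = exp_reward xi' (inord 3).
apply: funext => t; rewrite !exp_reward3 // E3.
by apply: eq_bigr => s _; rewrite (state_dist_inv xi xi' t V V' E0).
Qed.

Lemma J_eq0 gamma i (xi : profile R) : (forall t, exp_reward xi i t = 0) -> J gamma i xi = 0.
Proof.
move=> H; rewrite /J.
have -> : (fun n => \sum_(0 <= t < n) gamma ^+ t * exp_reward xi i t) = (fun _ => 0).
  by apply: funext => n; rewrite big1 // => t _; rewrite H mulr0.
exact: (norm_lim_cst _).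
Qed.

Lemma J_not3 gamma (i : 'I_4) (xi : profile R) : val i != 3%N -> J gamma i xi = 0.
Proof.
move=> H; apply: J_eq0 => t; rewrite /exp_reward big1 // => s _; rewrite big1 // => a _.
by rewrite /reward (negbTE H) mulr0.
Qed.

Definition det (b : bool) : lpolicy R := fun _ a => if a == b then 1 else 0.

Lemma det_valid b : is_lpolicy (det b).
Proof. move=> s; split => [a|]; rewrite /det; first by case: ifP => _; [exact: ler01 | exact: lexx]. by case: b; rewrite /= ?addr0 ?add0r. Qed.

Definition traj (c : bool) (t : nat) : gstate := iter t (fun s => trans s (cst c)) init_state.

Lemma state_dist_det (xi : profile R) c t s' : validp xi -> xi ord0 = det c ->
  state_dist xi t s' = if s' == traj c t then 1 else 0.
Proof.
move=> V E; elim: t s' => [//|t IH] s'.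
rewrite state_dist_S // E.
under eq_bigr do rewrite IH.
rewrite (bigD1 (traj c t)) //= eqxx mul1r [X in _ + X]big1 ?addr0; last first.
  by move=> s /negbTE ->; rewrite mul0r.
rewrite big_bool /det /=.
by clear E IH; case: c => /=; rewrite ?mul1r ?mul0r ?addr0 ?add0r eq_sym.
Qed.

Lemma exp_reward_det (xi : profile R) c d t : validp xi -> xi ord0 = det c ->
  xi (inord 3) = det d ->
  exp_reward xi (inord 3) t = if traj c t (inord 3) && d then 1 else 0.
Proof.
move=> V E0 E3; rewrite exp_reward3 //.
under eq_bigr do rewrite (state_dist_det _ _ t _ V E0).
rewrite (bigD1 (traj c t)) //= eqxx mul1r [X in _ + X]big1 ?addr0; last first.
  by move=> s /negbTE ->; rewrite mul0r.
rewrite E3 big_bool /det /reward !ffunE /=.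
have -> : (\val (inord 3 : 'I_4) == 3%N) by apply/eqP; exact: (@inordK 3 3).
by clear E3; case: d => /=; rewrite ?mul1r ?mul0r ?addr0 ?add0r ?andbT ?andbF.
Qed.

Lemma traj_false t : traj false t = init_state.
Proof.
elim: t => [//|t IH]; rewrite /traj iterS -/(traj false t) IH.
by apply/ffunP => i; rewrite !ffunE; case: ifP.
Qed.

Lemma traj_true t (i : 'I_4) : traj true t i = (val i < t)%N.
Proof.
elim: t i => [|t IH] i; first by rewrite /traj /= ffunE.
rewrite /traj iterS -/(traj true t) ffunE.
case: ifP => [/eqP H0|/negbT H0]; first by rewrite /cst ffunE H0.
rewrite IH /= inordK.
  by case: i H0 => [[|n] Hn].
by case: i H0 => [[|n] Hn] // _; rewrite /= ltnW.
Qed.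

Lemma validp_dev (xi : profile R) j p : validp xi -> is_lpolicy p -> validp (deviate xi j p).
Proof. by move=> V Vp k; rewrite /deviate; case: ifP. Qed.

Lemma geom_sum (g : R) n : (1 - g) * \sum_(0 <= t < n) g ^+ t = 1 - g ^+ n.
Proof.
elim: n => [|n IH]; first by rewrite big_geq // mulr0 expr0 subrr.
rewrite big_nat_recr //= mulrDr IH exprSr.
by rewrite mulrBl mul1r addrA subrK mulrC.
Qed.

Lemma J_pos (gamma : R) : 0 < gamma -> gamma < 1 ->
  0 < limn (fun n => \sum_(0 <= t < n) gamma ^+ t * (if (3 < t)%N then 1 else 0)).
Proof.
move=> g0 g1.
set u := (fun n => _).
have inc : {homo u : n m / (n <= m)%N >-> n <= m}.
  apply/nondecreasing_seqP => n; rewrite /u big_nat_recr //= lerDl.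
  by apply: mulr_ge0; [exact: exprn_ge0 (ltW g0) | case: ifP].
have ub : has_ubound (range u).
  exists (1 - gamma)^-1 => _ [n _ <-].
  have h1 : 0 < 1 - gamma by rewrite subr_gt0.
  apply: (@le_trans _ _ (\sum_(0 <= t < n) gamma ^+ t)).
    apply: ler_sum_nat => t _; case: ifP => _; rewrite ?mulr1 ?mulr0 //.
    exact: exprn_ge0 (ltW g0).
  have -> : \sum_(0 <= t < n) gamma ^+ t = (1 - gamma ^+ n) / (1 - gamma).
    by rewrite -geom_sum mulrAC divff ?mul1r // gt_eqF.
  rewrite ler_pdivrMr // mulVf ?gt_eqF // gerBl.
  exact: exprn_ge0 (ltW g0).
have cv := nondecreasing_is_cvgn inc ub.
apply: (lt_le_trans _ (nondecreasing_cvgn_le inc cv 5)).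
rewrite /u !big_nat_recr //= big_geq // !mulr0 !add0r mulr1.
exact: exprn_gt0.
Qed.

End Aux.

Theorem mainTheorem4 (R : realType) (gamma : R) :
  0 < gamma -> gamma < 1 ->
  is_kNMPG (@is_lpolicy R) path_dist 1 (J gamma) /\
  ~ is_MPG (@is_lpolicy R) (J gamma).
Proof.
move=> g0 g1; split.
  exists (fun i xi => if (2 <= val i)%N then J gamma (inord 3) xi else 0).
  move=> i j Hd xi p' V Vp.
  have Vd : validp R (deviate xi j p') by move=> k; rewrite /deviate; case: ifP.
  case: i Hd => [[|[|[|[|i]]]] Hi] //; case: j Vd => [[|[|[|[|j]]]] Hj] // Vd;
    rewrite /path_dist /= => Hd //.
  all: try (have Jz : forall x : profile R, J gamma (Ordinal Hj) x = 0 by move=> x; apply: J_not3).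
  all: try (rewrite !Jz /= ?subrr //).
  all: try (have E3 : Ordinal Hj = inord 3 by apply: val_inj; rewrite /= inordK).
  all: try (by rewrite E3).
  1-3: rewrite (@J3_inv _ gamma (deviate xi (Ordinal Hj) p') xi) ?subrr //; rewrite /deviate.
  1-3: by rewrite (_ : (inord 3 == _) = false) // -val_eqE /= inordK.
move=> [Phi HP].
pose A : profile R := fun _ => det R false.
pose B := deviate A (inord 3) (det R true).
pose C := deviate A ord0 (det R true).
pose D := deviate C (inord 3) (det R true).
have VA : validp R A by move=> k; exact: det_valid.
have VB : validp R B by apply: validp_dev => //; exact: det_valid.
have VC : validp R C by apply: validp_dev => //; exact: det_valid.
have VD : validp R D by apply: validp_dev => //; exact: det_valid.
have n30 : (ord0 == inord 3 :> 'I_4) = false by rewrite -val_eqE /= inordK.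
have DB : deviate B ord0 (det R true) = D.
  apply: funext => k; rewrite /B /D /C /deviate.
  by case: (k == ord0); case: (k == inord 3).
have h1 := HP (inord 3) A (det R true) VA (det_valid _ true).
have h2 := HP (inord 3) C (det R true) VC (det_valid _ true).
have h3 := HP ord0 A (det R true) VA (det_valid _ true).
have h4 := HP ord0 B (det R true) VB (det_valid _ true).
rewrite DB -/B -/C -/D in h1 h2 h3 h4.
rewrite !(@J_not3 _ gamma ord0) // subrr in h3 h4.
have JA : J gamma (inord 3) A = 0.
  by apply: J_eq0 => t; rewrite (@exp_reward_det _ A false false t) // andbF.
have side : forall (x : profile R) c d, x = B \/ x = C \/ x = D ->
    x ord0 = det R c -> x (inord 3) = det R d -> forall t,
    exp_reward x (inord 3) t = if traj c t (inord 3) && d then 1 else 0.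
  move=> x c d Hx E0 E3 t; apply: exp_reward_det => //.
  by case: Hx => [->|[->|->]].
have JB : J gamma (inord 3) B = 0.
  apply: J_eq0 => t; rewrite (@side B false true) ?traj_false ?ffunE //.
  - by left.
  - by rewrite /B /deviate n30.
  - by rewrite /B /deviate eqxx.
have n03 : (inord 3 == ord0 :> 'I_4) = false by rewrite eq_sym n30.
have JC : J gamma (inord 3) C = 0.
{ apply: J_eq0 => t; rewrite (@side C true false) ?andbF //.
  all: try by right; left.
  all: by rewrite /C /A /deviate ?eqxx ?n03. }
have JD : J gamma (inord 3) D > 0.
{ have := @J_pos R gamma g0 g1; rewrite /J.
  have -> // : exp_reward D (inord 3) = fun t => if (3 < t)%N then 1 else 0.
  apply: funext => t; rewrite (@side D true true) //; first by rewrite traj_true andbT /= inordK.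
  all: try by right; right.
  all: by rewrite /D /C /A /deviate ?eqxx ?n30 ?n03. }
rewrite JA JB subrr in h1; rewrite JC subr0 in h2.
have : J gamma (inord 3) D = 0.
  have e3 : Phi C = Phi A by apply/eqP; rewrite -subr_eq0 -h3.
  have e4 : Phi D = Phi B by apply/eqP; rewrite -subr_eq0 -h4.
  by rewrite h2 e3 e4 -h1.
by move=> E; rewrite E ltxx in JD.
Qed.
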